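(* Let $\mu\in(0,1)$ and let $\beta:[0,\infty)\to(0,\infty)$ be positive, bounded, non-increasing with $\lim_{a\to\infty}a\beta(a)=\mu$. Let $B(a)=\int_0^a\beta(s)\,ds$ and $W(\tau,b)=C(\tau)e^{-B(e^{\tau}b)}(1-b)^{\mu-1}$ for $\tau\ge0$, $b\in[0,1)$, with $C(\tau)>0$ such that $\int_0^1W(\tau,b)\,db=1$. Define $\delta(\tau)=\frac{C'(\tau)}{C(\tau)^2}-\frac{\mu}{C(\tau)}$. Then $W$ satisfies $$\partial_\tau W(\tau,b)+\partial_b((1-b)W(\tau,b))+e^{\tau}\beta(e^{\tau}b)W(\tau,b)=W(\tau,b)C(\tau)\delta(\tau),$$ $$W(\tau,0)(1+\delta(\tau))=\int_0^1e^{\tau}\beta(e^{\tau}b)W(\tau,b)\,db.$$ *)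

(* Defs.v *)
From Stdlib Require Import Reals.
From Coquelicot Require Import Coquelicot.
Open Scope R_scope.

(* B(a) = \int_0^a beta(s) ds  (Riemann integral; beta is monotone, hence
   Riemann integrable on every [0,a]). *)
Definition Bfun (beta : R -> R) (a : R) : R := RInt beta 0 a.

Definition Wfun (beta : R -> R) (mu : R) (C : R -> R) (tau b : R) : R :=
  C tau * exp (- Bfun beta (exp tau * b)) * Rpower (1 - b) (mu - 1).

(* Derivative of f at x, with increments restricted to the set D
   (used with D = [0,oo) so that at tau = 0 it is the right derivative). *)
Definition deriv_within (D : R -> Prop) (f : R -> R) (x l : R) : Prop :=
  filterlim (fun t => (f t - f x) / (t - x))
    (within (fun t => D t /\ t <> x) (locally x)) (locally l).

(* Main.v *)
Require Import Defs.
From Stdlib Require Import Reals Lra Lia ClassicalEpsilon.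
From Coquelicot Require Import Coquelicot.
Open Scope R_scope.

Lemma ind_int (G : R -> R) (c a b : R) :
  a <= b -> (forall x y, x <= y -> G x <= G y) ->
  ex_RInt (fun x => if Rle_dec c (G x) then 1 else 0) a b.
Proof.
  intros hab hG.
  destruct (Rlt_dec (G b) c) as [Hb|Hb].
  { apply ex_RInt_ext with (fun _ => 0).
    - intros x Hx. rewrite Rmin_left in Hx by lra. rewrite Rmax_right in Hx by lra.
      destruct (Rle_dec c (G x)) as [h|h]; auto.
      exfalso. assert (G x <= G b) by (apply hG; lra). lra.
    - apply ex_RInt_const. }
  destruct (Rle_dec c (G a)) as [Ha|Ha].
  { apply ex_RInt_ext with (fun _ => 1).
    - intros x Hx. rewrite Rmin_left in Hx by lra. rewrite Rmax_right in Hx by lra.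
      destruct (Rle_dec c (G x)) as [h|h]; auto.
      exfalso. assert (G a <= G x) by (apply hG; lra). lra.
    - apply ex_RInt_const. }
  set (E := fun x => a <= x <= b /\ G x < c).
  assert (bE : bound E). { exists b. intros x [Hx _]. lra. }
  assert (nE : exists x, E x). { exists a. split; lra. }
  destruct (completeness E bE nE) as [s [Hs1 Hs2]].
  assert (Has : a <= s). { apply Hs1. split; lra. }
  assert (Hsb : s <= b). { apply Hs2. intros x [Hx _]. lra. }
  apply ex_RInt_Chasles_0 with s; [lra| |].
  - apply ex_RInt_ext with (fun _ => 0).
    + intros x Hx. rewrite Rmin_left in Hx by lra. rewrite Rmax_right in Hx by lra.
      destruct (Rle_dec c (G x)) as [h|h]; auto.
      exfalso.
      assert (Hub : is_upper_bound E x).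
      { intros y [Hy1 Hy2]. destruct (Rle_dec y x) as [|Hyx]; [lra|].
        assert (G x <= G y) by (apply hG; lra). lra. }
      assert (s <= x) by (apply Hs2; exact Hub). lra.
    + apply ex_RInt_const.
  - apply ex_RInt_ext with (fun _ => 1).
    + intros x Hx. rewrite Rmin_left in Hx by lra. rewrite Rmax_right in Hx by lra.
      destruct (Rle_dec c (G x)) as [h|h]; auto.
      exfalso. assert (x <= s) by (apply Hs1; split; lra). lra.
    + apply ex_RInt_const.
Qed.

Fixpoint Qs (h y : R) (N : nat) : R :=
  match N with
  | O => 0
  | S N' => Qs h y N' + (if Rle_dec (INR (S N') * h) y then h else 0)
  end.

Lemma Qs_full h y N : 0 < h -> INR N * h <= y -> Qs h y N = INR N * h.
Proof.
  intros hh. induction N as [|N IH]; intros Hy; cbn [Qs].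
  - simpl. ring.
  - rewrite IH.
    + destruct (Rle_dec (INR (S N) * h) y); [|lra]. rewrite (S_INR N). ring.
    + rewrite S_INR in Hy. lra.
Qed.

Lemma Qs_approx h y N : 0 < h -> 0 <= y <= INR N * h -> 0 <= y - Qs h y N < h.
Proof.
  intros hh. induction N as [|N IH]; intros Hy; cbn [Qs].
  - simpl in Hy. lra.
  - rewrite S_INR in Hy.
    destruct (Rle_dec y (INR N * h)) as [Hle|Hlt].
    + specialize (IH (conj (proj1 Hy) Hle)).
      destruct (Rle_dec (INR (S N) * h) y) as [h2|h2].
      * rewrite S_INR in h2. lra.
      * lra.
    + rewrite Qs_full by lra.
      destruct (Rle_dec (INR (S N) * h) y) as [h2|h2]; rewrite S_INR in *; lra.
Qed.

Lemma ind_int_h (G : R -> R) c h a b : ex_RInt (fun x => if Rle_dec c (G x) then 1 else 0) a b ->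
 ex_RInt (fun x => (if Rle_dec c (G x) then h else 0)) a b.
Proof.
  intro H. generalize (ex_RInt_scal (V := R_NormedModule) _ a b h H).
  apply ex_RInt_ext. intros x _.
  change (h * (if Rle_dec c (G x) then 1 else 0) = (if Rle_dec c (G x) then h else 0)).
  destruct (Rle_dec c (G x)); ring.
Qed.

Lemma Qs_int (G : R -> R) h N a b : a <= b -> (forall x y, x <= y -> G x <= G y) ->
  ex_RInt (fun x => Qs h (G x) N) a b.
Proof.
  intros hab hG. induction N as [|N IH]; cbn [Qs].
  - apply ex_RInt_const.
  - assert (H2 : ex_RInt (fun x => (if Rle_dec (INR (S N) * h) (G x) then h else 0)) a b).
    { apply ind_int_h, ind_int; auto. }
    generalize (ex_RInt_plus (V := R_NormedModule) _ _ a b IH H2).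
    apply ex_RInt_ext. intros; reflexivity.
Qed.

Lemma ex_RInt_incr_glob (F : R -> R) (m : R) (k : nat) a b :
  a <= b -> (forall x y, x <= y -> F x <= F y) ->
  (forall x, m <= F x <= m + INR k) -> ex_RInt F a b.
Proof.
  intros hab hF hb.
  set (g := fun (n : nat) x => m + Qs (/ INR (S n)) (F x - m) (S n * k)).
  assert (Hg : forall n, ex_RInt (g n) a b).
  { intros n. apply (ex_RInt_plus (V := R_NormedModule) (fun _ => m)).
    - apply ex_RInt_const.
    - apply Qs_int with (G := fun x => F x - m); auto. intros x y hxy. specialize (hF x y hxy). lra. }
  destruct (filterlim_RInt g a b eventually eventually_filter F (fun n => RInt (g n) a b))
    as [If [_ HIf]].
  - intros n. apply RInt_correct, Hg.
  - intros P [eps Heps]. 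
    destruct (nfloor_ex (/ eps)) as [N0 HN0]. { left. apply Rinv_0_lt_compat, cond_pos. }
    exists N0. intros n Hn. apply Heps.
    intros t. 
    assert (hpos : 0 < / INR (S n)) by (apply Rinv_0_lt_compat, lt_0_INR; lia).
    assert (H := Qs_approx (/ INR (S n)) (F t - m) (S n * k) hpos).
    assert (Hs : INR (S n * k) * / INR (S n) = INR k).
    { rewrite mult_INR. field. apply not_0_INR. lia. }
    specialize (H ltac:(rewrite Hs; specialize (hb t); lra)).
    change (Rabs (g n t - F t) < eps). unfold g.
    assert (hlt : / INR (S n) < eps).
    { assert (INR N0 <= INR n) by (apply le_INR; lia).
      assert (/ eps < INR (S n)) by (rewrite S_INR; lra).
      apply Rinv_lt_contravar in H1.
      - rewrite Rinv_inv in H1. exact H1.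
      - apply Rmult_lt_0_compat. apply Rinv_0_lt_compat, cond_pos. rewrite S_INR; pose proof (pos_INR n); lra. }
    rewrite Rabs_left1; lra.
  - exists If. exact HIf.
Qed.

Lemma ex_RInt_incr (g : R -> R) a b : a <= b ->
  (forall x y, a <= x -> x <= y -> y <= b -> g x <= g y) -> ex_RInt g a b.
Proof.
  intros hab hg.
  set (F := fun x => g (Rmax a (Rmin x b))).
  assert (hF : forall x y, x <= y -> F x <= F y).
  { intros x y hxy. unfold F. apply hg.
    - apply Rmax_l.
    - apply Rle_max_compat_l. apply Rle_min_compat_r. exact hxy.
    - apply Rmax_lub; [lra|apply Rmin_r]. }
  assert (hgab : g a <= g b) by (apply hg; lra).
  destruct (nfloor_ex (g b - g a)) as [n Hn]; [lra|].
  apply ex_RInt_ext with F.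
  - intros x Hx. rewrite Rmin_left in Hx by lra. rewrite Rmax_right in Hx by lra.
    unfold F. rewrite Rmin_left by lra. rewrite Rmax_right by lra. reflexivity.
  - apply (ex_RInt_incr_glob F (g a) (S n)); auto.
    intros x. unfold F. rewrite S_INR.
    assert (Hm : a <= Rmax a (Rmin x b) <= b).
    { split; [apply Rmax_l|apply Rmax_lub; [lra|apply Rmin_r]]. }
    split.
    + apply hg; lra.
    + assert (g (Rmax a (Rmin x b)) <= g b) by (apply hg; lra). lra.
Qed.

Lemma ex_RInt_decr (g : R -> R) a b : a <= b ->
  (forall x y, a <= x -> x <= y -> y <= b -> g y <= g x) -> ex_RInt g a b.
Proof.
  intros hab hg.
  assert (H : ex_RInt (fun x => - g x) a b).
  { apply ex_RInt_incr; auto. intros x y h1 h2 h3. specialize (hg x y h1 h2 h3). lra. }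
  generalize (ex_RInt_opp (V := R_NormedModule) _ a b H).
  apply ex_RInt_ext. intros x _. change (- - g x = g x). ring.
Qed.

Lemma ex_RInt_prod_di (g k : R -> R) a b : a <= b ->
  (forall x y, a <= x -> x <= y -> y <= b -> g y <= g x) ->
  (forall x y, a <= x -> x <= y -> y <= b -> k x <= k y) ->
  (forall x, a <= x <= b -> 0 <= g x /\ 0 <= k x) ->
  ex_RInt (fun x => g x * k x) a b.
Proof.
  intros hab hg hk hp.
  assert (H1 : ex_RInt (fun x => g a * k x) a b).
  { apply ex_RInt_incr; auto. intros x y h1 h2 h3.
    apply Rmult_le_compat_l; [apply hp; lra|apply hk; lra]. }
  assert (H2 : ex_RInt (fun x => (g a - g x) * k x) a b).
  { apply ex_RInt_incr; auto. intros x y h1 h2 h3.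
    assert (0 <= g a - g x) by (assert (g x <= g a) by (apply hg; lra); lra).
    apply Rmult_le_compat.
    - assumption.
    - apply hp; lra.
    - assert (g y <= g x) by (apply hg; lra). lra.
    - apply hk; lra. }
  generalize (ex_RInt_minus (V := R_NormedModule) _ _ a b H1 H2).
  apply ex_RInt_ext. intros x _. change (g a * k x - (g a - g x) * k x = g x * k x). ring.
Qed.

Lemma ex_RInt_prod_dd (g k : R -> R) a b : a <= b ->
  (forall x y, a <= x -> x <= y -> y <= b -> g y <= g x) ->
  (forall x y, a <= x -> x <= y -> y <= b -> k y <= k x) ->
  (forall x, a <= x <= b -> 0 <= g x /\ 0 <= k x) ->
  ex_RInt (fun x => g x * k x) a b.
Proof.
  intros hab hg hk hp. apply ex_RInt_decr; auto.
  intros x y h1 h2 h3. apply Rmult_le_compat.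
  - apply hp; lra. - apply hp; lra. - apply hg; lra. - apply hk; lra.
Qed.

Section Lims.
Context {T : Type} {F : (T -> Prop) -> Prop} {FF : Filter F}.

Lemma lim_plus (f g : T -> R) a b : filterlim f F (locally a) -> filterlim g F (locally b) ->
  filterlim (fun x => f x + g x) F (locally (a + b)).
Proof.
  intros Hf Hg. apply (filterlim_comp_2 f g Rplus Hf Hg).
  exact (filterlim_plus (K := R_AbsRing) (V := R_NormedModule) a b).
Qed.

Lemma lim_mult (f g : T -> R) a b : filterlim f F (locally a) -> filterlim g F (locally b) ->
  filterlim (fun x => f x * g x) F (locally (a * b)).
Proof.
  intros Hf Hg. apply (filterlim_comp_2 f g Rmult Hf Hg).
  exact (filterlim_mult (K := R_AbsRing) a b).
Qed.

Lemma lim_const (a : R) : filterlim (fun _ : T => a) F (locally a).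
Proof. apply filterlim_const. Qed.

Lemma lim_opp (f : T -> R) a : filterlim f F (locally a) -> filterlim (fun x => - f x) F (locally (- a)).
Proof.
  intros Hf. replace (-a) with ((-1) * a) by ring.
  assert (H := lim_mult (fun _ => -1) f (-1) a (lim_const (-1)) Hf).
  eapply filterlim_ext; [|exact H]. intros x; simpl; ring.
Qed.

Lemma lim_minus (f g : T -> R) a b : filterlim f F (locally a) -> filterlim g F (locally b) ->
  filterlim (fun x => f x - g x) F (locally (a - b)).
Proof. intros Hf Hg. apply lim_plus; auto. apply lim_opp; auto. Qed.

Lemma lim_inv (f : T -> R) a : a <> 0 -> filterlim f F (locally a) ->
  filterlim (fun x => / f x) F (locally (/ a)).
Proof.
  intros Ha Hf. eapply filterlim_comp; [exact Hf|].
  assert (H := filterlim_Rbar_inv (Finite a) ltac:(intro h; apply Ha; injection h; auto)).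
  exact H.
Qed.

Lemma lim_ext (f g : T -> R) a : F (fun x => f x = g x) -> filterlim f F (locally a) ->
  filterlim g F (locally a).
Proof. intros. eapply filterlim_ext_loc; eauto. Qed.

End Lims.

Lemma RInt_plusR f g a b : ex_RInt f a b -> ex_RInt g a b ->
  RInt (fun x => f x + g x) a b = RInt f a b + RInt g a b.
Proof. intros. exact (RInt_plus (V := R_CompleteNormedModule) f g a b H H0). Qed.

Lemma RInt_scalR f a b l : ex_RInt f a b -> RInt (fun x => l * f x) a b = l * RInt f a b.
Proof. intros. exact (RInt_scal (V := R_CompleteNormedModule) f a b l H). Qed.

Lemma ex_RInt_plusR f g a b : ex_RInt f a b -> ex_RInt g a b -> ex_RInt (fun x => f x + g x) a b.
Proof. intros. exact (ex_RInt_plus (V := R_NormedModule) f g a b H H0). Qed.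

Lemma ex_RInt_scalR f a b l : ex_RInt f a b -> ex_RInt (fun x => l * f x) a b.
Proof. intros. exact (ex_RInt_scal (V := R_NormedModule) f a b l H). Qed.

Lemma RInt_ChaslesR f a b c : ex_RInt f a b -> ex_RInt f b c -> RInt f a b + RInt f b c = RInt f a c.
Proof. intros. exact (RInt_Chasles (V := R_CompleteNormedModule) f a b c H H0). Qed.

Lemma RInt_constR a b c : RInt (fun _ => c) a b = (b - a) * c.
Proof. exact (RInt_const (V := R_CompleteNormedModule) a b c). Qed.

Lemma ex_RInt_sub (f : R -> R) a b c d : a <= c -> c <= d -> d <= b -> ex_RInt f a b -> ex_RInt f c d.
Proof.
  intros h1 h2 h3 H.
  apply (ex_RInt_Chasles_1 (V := R_CompleteNormedModule) f c d b); [lra|].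
  apply (ex_RInt_Chasles_2 (V := R_CompleteNormedModule) f a c b); [lra|exact H].
Qed.

Lemma RInt_le_const (f : R -> R) a b m M : a <= b -> ex_RInt f a b ->
  (forall x, a < x < b -> m <= f x <= M) -> (b - a) * m <= RInt f a b <= (b - a) * M.
Proof.
  intros hab Hf Hb. split.
  - rewrite <- RInt_constR. apply RInt_le; auto. apply ex_RInt_const. intros x hx; apply Hb; auto.
  - rewrite <- RInt_constR. apply RInt_le; auto. apply ex_RInt_const. intros x hx; apply Hb; auto.
Qed.

Definition imp (g : R -> R) (L : R) : Prop :=
  (forall y, 0 <= y < 1 -> ex_RInt g 0 y) /\
  filterlim (fun y => RInt g 0 y) (at_left 1) (locally L).

Lemma at_left1_near (P : R -> Prop) : at_left 1 P -> exists e, 0 < e < 1 /\ forall y, 1 - e < y < 1 -> P y.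
Proof.
  intros [d Hd]. exists (Rmin (d/2) (1/2)).
  assert (0 < d) by apply cond_pos.
  split. { split. apply Rmin_glb_lt; lra. apply Rle_lt_trans with (1/2); [apply Rmin_r|lra]. }
  intros y Hy. apply Hd; [|lra].
  change (Rabs (y - 1) < d). rewrite Rabs_left by lra.
  assert (Rmin (d/2) (1/2) <= d/2) by apply Rmin_l. lra.
Qed.

Lemma at_left1_above (y : R) : y < 1 -> at_left 1 (fun z => y < z).
Proof.
  intros hy. assert (hp : 0 < 1 - y) by lra. exists (mkposreal _ hp).
  intros z Hz _. change (Rabs (z - 1) < 1 - y) in Hz.
  apply Rabs_lt_between' in Hz. lra.
Qed.

Lemma at_left1_lt : at_left 1 (fun z => z < 1).
Proof. exists (mkposreal 1 Rlt_0_1). intros z _ h. exact h. Qed.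

Lemma imp_gen (g : R -> R) L : imp g L -> is_RInt_gen g (at_point 0) (at_left 1) L.
Proof.
  intros [Hex Hlim] P HP.
  assert (H1 := Hlim P HP). simpl in H1. unfold filtermap in H1.
  apply Filter_prod with (Q := fun x => x = 0)
    (R := fun y => 0 < y /\ (y < 1 /\ P (RInt g 0 y))).
  - reflexivity.
  - apply filter_and; [apply at_left1_above; lra|].
    apply filter_and; [exact at_left1_lt|exact H1].
  - intros x y -> [hy [hy1 HPy]]. exists (RInt g 0 y). split; [|exact HPy].
    simpl. apply (RInt_correct (V := R_CompleteNormedModule)). apply Hex. lra.
Qed.

Lemma gen_imp (g : R -> R) L : is_RInt_gen g (at_point 0) (at_left 1) L -> imp g L.
Proof.
  intros H.
  assert (Hev : at_left 1 (fun y => exists l, is_RInt g 0 y l /\ True)).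
  { destruct (H (fun _ => True)) as [Q R0 HQ HR HQR].
    - exists (mkposreal 1 Rlt_0_1). intros; exact I.
    - apply filter_imp with R0; auto. intros y Hy. apply (HQR 0 y HQ Hy). }
  split.
  - intros y Hy.
    destruct (filter_ex (F := at_left 1) _ (filter_and _ _ Hev (at_left1_above y (proj2 Hy)))) as [z [[l [Hl _]] Hz]].
    apply (ex_RInt_Chasles_1 (V := R_CompleteNormedModule) g 0 y z); [lra|]. exists l; exact Hl.
  - intros P HP. destruct (H P HP) as [Q R0 HQ HR HQR].
    simpl. unfold filtermap. apply filter_imp with R0; auto.
    intros y Hy. destruct (HQR 0 y HQ Hy) as [l [Hl HPl]]. simpl in Hl.
    rewrite (is_RInt_unique g 0 y l Hl). exact HPl.
Qed.

Lemma al_proper : ProperFilter' (at_left 1).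
Proof. apply Proper_StrongProper, at_left_proper_filter. Qed.

Lemma lim_le_al (f g : R -> R) a b : at_left 1 (fun x => f x <= g x) ->
  filterlim f (at_left 1) (locally a) -> filterlim g (at_left 1) (locally b) -> a <= b.
Proof.
  intros H Hf Hg. exact (filterlim_le (F := at_left 1) f g a b H Hf Hg).
Qed.

Lemma imp_ext (g1 g2 : R -> R) L : (forall x, 0 < x < 1 -> g1 x = g2 x) -> imp g1 L -> imp g2 L.
Proof.
  intros He [Hex Hl]. split.
  - intros y Hy. apply ex_RInt_ext with g1; [|apply Hex; auto].
    intros x Hx. rewrite Rmin_left in Hx by lra. rewrite Rmax_right in Hx by lra. apply He; lra.
  - apply lim_ext with (fun y => RInt g1 0 y); auto.
    apply filter_imp with (fun y => 0 < y < 1).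
    + intros y Hy. apply RInt_ext. intros x Hx.
      rewrite Rmin_left in Hx by lra. rewrite Rmax_right in Hx by lra. apply He; lra.
    + apply filter_and; [apply at_left1_above; lra|exact at_left1_lt].
Qed.

Lemma imp_lin (g1 g2 : R -> R) L1 L2 a b : imp g1 L1 -> imp g2 L2 ->
  imp (fun x => a * g1 x + b * g2 x) (a * L1 + b * L2).
Proof.
  intros [Hx1 Hl1] [Hx2 Hl2]. split.
  - intros y Hy. apply ex_RInt_plusR; apply ex_RInt_scalR; auto.
  - apply lim_ext with (fun y => a * RInt g1 0 y + b * RInt g2 0 y).
    + apply filter_imp with (fun y => 0 < y < 1).
      * intros y Hy. rewrite RInt_plusR by (apply ex_RInt_scalR; auto with real; first [apply Hx1|apply Hx2]; lra).
        rewrite !RInt_scalR; auto; [apply Hx2|apply Hx1]; lra.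
      * apply filter_and; [apply at_left1_above; lra|exact at_left1_lt].
    + apply lim_plus.
      * apply lim_mult; [apply lim_const|exact Hl1].
      * apply lim_mult; [apply lim_const|exact Hl2].
Qed.

Lemma imp_le (g1 g2 : R -> R) L1 L2 : imp g1 L1 -> imp g2 L2 ->
  (forall x, 0 < x < 1 -> g1 x <= g2 x) -> L1 <= L2.
Proof.
  intros [Hx1 Hl1] [Hx2 Hl2] Hle.
  refine (lim_le_al _ _ _ _ _ Hl1 Hl2).
  apply filter_imp with (fun y => 0 < y < 1).
  - intros y Hy. apply RInt_le; try lra; [apply Hx1|apply Hx2|]; try lra.
    intros x Hx; apply Hle; lra.
  - apply filter_and; [apply at_left1_above; lra|exact at_left1_lt].
Qed.

Lemma imp_tail (g : R -> R) L y lo hi : imp g L -> 0 <= y < 1 ->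
  (forall y', y < y' < 1 -> lo <= RInt g y y' <= hi) -> lo <= L - RInt g 0 y <= hi.
Proof.
  intros [Hx Hl] Hy Hb.
  assert (Hl' : filterlim (fun z => RInt g 0 z - RInt g 0 y) (at_left 1) (locally (L - RInt g 0 y))).
  { apply lim_minus; [exact Hl|apply lim_const]. }
  assert (Hev : at_left 1 (fun z => lo <= RInt g 0 z - RInt g 0 y <= hi)).
  { apply filter_imp with (fun z => y < z < 1).
    - intros z Hz.
      assert (HC : RInt g 0 y + RInt g y z = RInt g 0 z).
      { apply RInt_ChaslesR. apply Hx; lra. apply ex_RInt_sub with 0 z; try lra. apply Hx; lra. }
      specialize (Hb z Hz). lra.
    - apply filter_and; [apply at_left1_above; lra|exact at_left1_lt]. }
  split.
  - apply (lim_le_al (fun _ => lo) (fun z => RInt g 0 z - RInt g 0 y) lo _); [|apply lim_const|exact Hl'].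
    apply filter_imp with (2 := Hev). intros z Hz; apply Hz.
  - apply (lim_le_al (fun z => RInt g 0 z - RInt g 0 y) (fun _ => hi) _ hi); [|exact Hl'|apply lim_const].
    apply filter_imp with (2 := Hev). intros z Hz; apply Hz.
Qed.

Lemma imp_exists (g : R -> R) K : (forall y, 0 <= y < 1 -> ex_RInt g 0 y) ->
  (forall x, 0 < x < 1 -> 0 <= g x) -> (forall y, 0 <= y < 1 -> RInt g 0 y <= K) ->
  exists L, imp g L.
Proof.
  intros Hx Hpos HK.
  set (E := fun v => exists y, 0 <= y < 1 /\ v = RInt g 0 y).
  assert (bE : bound E). { exists K. intros v [y [Hy ->]]. apply HK; auto. }
  assert (nE : exists v, E v). { exists (RInt g 0 0). exists 0. split; [lra|auto]. }
  destruct (completeness E bE nE) as [L [HL1 HL2]].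
  assert (Hmono : forall y z, 0 <= y -> y <= z < 1 -> RInt g 0 y <= RInt g 0 z).
  { intros y z hy hz.
    assert (HC : RInt g 0 y + RInt g y z = RInt g 0 z).
    { apply RInt_ChaslesR. apply Hx; lra. apply ex_RInt_sub with 0 z; try lra. apply Hx; lra. }
    assert (0 <= RInt g y z). { apply RInt_ge_0; try lra. apply ex_RInt_sub with 0 z; try lra. apply Hx; lra.
        intros x hx; apply Hpos; lra. }
    lra. }
  exists L. split; auto.
  intros P [eps HP].
  assert (Hne : exists y, 0 <= y < 1 /\ L - eps < RInt g 0 y).
  { destruct (Rlt_dec (L - eps) L) as [_|h]; [|pose proof (cond_pos eps); lra].
    apply Classical_Prop.NNPP. intro hn.
    assert (L <= L - eps).
    { apply HL2. intros v [y [Hy ->]]. apply Rnot_lt_le. intro h. apply hn. exists y. auto. }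
    pose proof (cond_pos eps); lra. }
  destruct Hne as [y0 [Hy0 Hy0']].
  simpl. unfold filtermap. apply filter_imp with (fun z => y0 < z < 1).
  - intros z Hz. apply HP. change (Rabs (RInt g 0 z - L) < eps).
    assert (RInt g 0 z <= L) by (apply HL1; exists z; split; [lra|auto]).
    assert (RInt g 0 y0 <= RInt g 0 z) by (apply Hmono; lra).
    apply Rabs_lt_between'. lra.
  - apply filter_and; [apply at_left1_above; lra|exact at_left1_lt].
Qed.

Lemma lim_eps {T} {F : (T -> Prop) -> Prop} {FF : Filter F} (g : T -> R) L :
  (forall eps, 0 < eps -> F (fun x => Rabs (g x - L) < eps)) -> filterlim g F (locally L).
Proof.
  intros H P [eps HP]. apply filter_imp with (2 := H eps (cond_pos eps)).
  intros x Hx. apply HP. exact Hx.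
Qed.

Lemma eps_lim {T} {F : (T -> Prop) -> Prop} {FF : Filter F} (g : T -> R) L :
  filterlim g F (locally L) -> forall eps, 0 < eps -> F (fun x => Rabs (g x - L) < eps).
Proof.
  intros H eps he. apply (H (fun v => Rabs (v - L) < eps)).
  exists (mkposreal eps he). intros v Hv. exact Hv.
Qed.

Lemma RInt_extR (f g : R -> R) a b : (forall x, Rmin a b < x < Rmax a b -> @eq R (f x) (g x)) ->
  RInt f a b = RInt g a b.
Proof. intros H. apply RInt_ext. exact H. Qed.

Lemma ex_RInt_extR (f g : R -> R) a b : (forall x, Rmin a b < x < Rmax a b -> @eq R (f x) (g x)) ->
  ex_RInt f a b -> ex_RInt g a b.
Proof. intros H. apply ex_RInt_ext. exact H. Qed.

Lemma imp_scal (g : R -> R) L a : imp g L -> imp (fun x => a * g x) (a * L).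
Proof.
  intros H. assert (H2 := imp_lin g g L L a 0 H H).
  replace (a * L + 0 * L) with (a * L) in H2 by ring.
  eapply imp_ext; [|exact H2]. intros x _. cbv beta. ring.
Qed.

Lemma div_pos_bounds A B z u : 0 < u -> A * u <= z <= B * u -> A <= z / u <= B.
Proof.
  intros hu [h1 h2]. split.
  - apply Rmult_le_reg_r with u; auto. unfold Rdiv. rewrite Rmult_assoc, Rinv_l, Rmult_1_r; lra.
  - apply Rmult_le_reg_r with u; auto. unfold Rdiv. rewrite Rmult_assoc, Rinv_l, Rmult_1_r; lra.
Qed.

Lemma div_neg_bounds A B z u : u < 0 -> A * u <= z <= B * u -> B <= z / u <= A.
Proof.
  intros hu [h1 h2].
  assert (H := div_pos_bounds B A (- z) (- u) ltac:(lra) ltac:(split; lra)).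
  replace (- z / - u) with (z / u) in H by (field; lra). lra.
Qed.

Lemma const_lemma (D V : R -> R) a b : a <= b ->
  (forall x y, a <= x -> x <= y -> y <= b -> Rabs (D y - D x) <= (y - x) * (V y - V x)) ->
  D b = D a.
Proof.
  intros hab H.
  assert (Hn : forall n : nat, (0 < n)%nat -> Rabs (D b - D a) <= (b - a) * (V b - V a) / INR n).
  { intros n hn. assert (hnr : 0 < INR n) by (apply lt_0_INR; lia).
    set (h := (b - a) / INR n).
    assert (hh : 0 <= h) by (unfold h; apply Rmult_le_pos; [lra|left; apply Rinv_0_lt_compat; lra]).
    assert (Hk : forall k, (k <= n)%nat -> Rabs (D (a + INR k * h) - D a) <= h * (V (a + INR k * h) - V a)).
    { induction k as [|k IH]; intros hk.
      - simpl. rewrite Rmult_0_l, Rplus_0_r, Rminus_eq_0, Rabs_R0. lra.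
      - assert (hk1 : INR (S k) * h <= b - a).
        { unfold h. assert (INR (S k) <= INR n) by (apply le_INR; lia).
          replace (b - a) with (INR n * ((b - a) / INR n)) at 2 by (field; lra).
          apply Rmult_le_compat_r; [exact hh|lra]. }
        specialize (IH ltac:(lia)).
        rewrite S_INR in *.
        assert (hk0 : 0 <= INR k * h) by (apply Rmult_le_pos; [apply pos_INR|exact hh]).
        assert (Hs := H (a + INR k * h) (a + (INR k + 1) * h) ltac:(lra) ltac:(nra) ltac:(lra)).
        replace (a + (INR k + 1) * h - (a + INR k * h)) with h in Hs by ring.
        assert (Ht := Rabs_triang (D (a + (INR k + 1) * h) - D (a + INR k * h)) (D (a + INR k * h) - D a)).
        replace (D (a + (INR k + 1) * h) - D (a + INR k * h) + (D (a + INR k * h) - D a))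
          with (D (a + (INR k + 1) * h) - D a) in Ht by ring.
        nra. }
    specialize (Hk n (Nat.le_refl n)).
    replace (a + INR n * h) with b in Hk by (unfold h; field; lra).
    replace ((b - a) * (V b - V a) / INR n) with (h * (V b - V a)) by (unfold h; field; lra).
    exact Hk. }
  destruct (Req_dec (D b) (D a)) as [e|ne]; auto. exfalso.
  set (d := Rabs (D b - D a)).
  assert (hd : 0 < d) by (apply Rabs_pos_lt; lra).
  set (Z := (b - a) * (V b - V a)).
  destruct (nfloor_ex (Rabs Z / d)) as [n0 Hn0].
  { apply Rmult_le_pos; [apply Rabs_pos|left; apply Rinv_0_lt_compat; lra]. }
  assert (H1 := Hn (S n0) ltac:(lia)). fold d Z in H1.
  rewrite S_INR in H1.
  assert (hn : 0 < INR n0 + 1) by (pose proof (pos_INR n0); lra).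
  assert (HZ : Z <= Rabs Z) by apply Rle_abs.
  assert (Rabs Z < d * (INR n0 + 1)).
  { assert (Rabs Z / d < INR n0 + 1) by lra.
    apply (Rmult_lt_compat_l d) in H0; [|lra].
    replace (d * (Rabs Z / d)) with (Rabs Z) in H0 by (field; lra). lra. }
  assert (Z / (INR n0 + 1) < d).
  { apply Rmult_lt_reg_r with (INR n0 + 1); [lra|].
    replace (Z / (INR n0 + 1) * (INR n0 + 1)) with Z by (field; lra). lra. }
  lra.
Qed.

Definition impval (g : R -> R) : R :=
  match excluded_middle_informative (exists L, imp g L) with
  | left H => proj1_sig (constructive_indefinite_description _ H)
  | right _ => 0
  end.

Lemma imp_unique g L1 L2 : imp g L1 -> imp g L2 -> L1 = L2.
Proof.
  intros H1 H2. apply Rle_antisym; eapply imp_le; eauto; intros; lra.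
Qed.

Lemma impval_eq g L : imp g L -> impval g = L.
Proof.
  intros H. unfold impval. destruct (excluded_middle_informative _) as [h|h].
  - destruct (constructive_indefinite_description _ h) as [L' HL']. simpl. eapply imp_unique; eauto.
  - exfalso; apply h; eauto.
Qed.

Lemma Rpower_pos x y : 0 < Rpower x y.
Proof. unfold Rpower. apply exp_pos. Qed.

Lemma Rpower_1_l y : Rpower 1 y = 1.
Proof. unfold Rpower. rewrite ln_1, Rmult_0_r. apply exp_0. Qed.

Lemma Rpower_split x m : 0 < x -> Rpower x m = x * Rpower x (m - 1).
Proof.
  intros hx. replace m with (1 + (m - 1)) at 1 by ring. rewrite Rpower_plus, Rpower_1; auto.
Qed.

Lemma Rpower_mono_pos x y c : 0 <= c -> 0 < x <= y -> Rpower x c <= Rpower y c.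
Proof. apply Rle_Rpower_l. Qed.

Lemma Rpower_mono_neg x y c : c <= 0 -> 0 < x <= y -> Rpower y c <= Rpower x c.
Proof.
  intros hc hxy. replace c with (- (- c)) by ring. rewrite (Rpower_Ropp y (-c)), (Rpower_Ropp x (-c)).
  apply Rinv_le_contravar; [apply Rpower_pos|]. apply Rle_Rpower_l; lra.
Qed.

Lemma is_derive_val (f : R -> R) (x l1 l2 : R) : is_derive f x l1 -> @eq R l1 l2 -> is_derive f x l2.
Proof. intros H ->; exact H. Qed.

Lemma is_derive_cstR (c x : R) : is_derive (fun _ : R => c) x 0.
Proof. exact (is_derive_const (K := R_AbsRing) (V := R_NormedModule) c x). Qed.

Lemma is_derive_multR (f g : R -> R) x df dg : is_derive f x df -> is_derive g x dg ->
  is_derive (fun z => f z * g z) x (df * g x + f x * dg).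
Proof. intros H1 H2. exact (is_derive_mult f g x df dg H1 H2 (fun n m => Rmult_comm n m)). Qed.

Lemma is_derive_ext_locR (f g : R -> R) (x l : R) :
  (exists d : posreal, forall t, Rabs (t - x) < d -> @eq R (f t) (g t)) -> is_derive f x l -> is_derive g x l.
Proof.
  intros [d Hd] H. apply (is_derive_ext_loc f g x l); auto. exists d. intros t ht. apply Hd. exact ht.
Qed.

Lemma scalR (a b : R) : scal a b = a * b.
Proof. reflexivity. Qed.

Lemma is_derive_pw (m x : R) : x < 1 ->
  is_derive (fun z => Rpower (1 - z) m) x (- (m * Rpower (1 - x) (m - 1))).
Proof.
  intros hx.
  assert (H1 : is_derive (fun z => Rpower z m) (1 - x) (m * Rpower (1 - x) (m - 1))).
  { apply is_derive_Reals. apply derivable_pt_lim_power. lra. }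
  assert (H2 : is_derive (fun z : R => 1 - z) x (-1)).
  { apply is_derive_Reals. replace (-1) with (0 - 1) by ring.
    apply derivable_pt_lim_minus. apply derivable_pt_lim_const. apply derivable_pt_lim_id. }
  assert (H := is_derive_comp _ _ x _ _ H1 H2).
  eapply is_derive_val; [exact H|]. change ((-1) * (m * Rpower (1 - x) (m - 1)) = - (m * Rpower (1 - x) (m - 1))). ring.
Qed.

Definition WF (x : R) := within (fun t => 0 <= t /\ t <> x) (locally x).

Instance WF_filter x : Filter (WF x).
Proof. apply within_filter, locally_filter. Qed.

Lemma lim_to_WF (g : R -> R) x L : filterlim g (locally x) (locally L) -> filterlim g (WF x) (locally L).
Proof.
  intros H P HP. specialize (H P HP). unfold WF, within. simpl in *. unfold filtermap in *.
  apply filter_imp with (2 := H). intros; auto.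
Qed.

Lemma WF_forall x (P : R -> Prop) : (forall t, 0 <= t -> t <> x -> P t) -> WF x P.
Proof.
  intros H. unfold WF, within. apply filter_forall. intros t [h1 h2]. apply H; auto.
Qed.

Lemma dw_WF (f : R -> R) x l : deriv_within (fun t => 0 <= t) f x l <->
  filterlim (fun t => (f t - f x) / (t - x)) (WF x) (locally l).
Proof. reflexivity. Qed.

Lemma dpl_to_WF (f : R -> R) x l : derivable_pt_lim f x l ->
  filterlim (fun t => (f t - f x) / (t - x)) (WF x) (locally l).
Proof.
  intros H. apply lim_eps. intros eps he.
  destruct (H eps he) as [d Hd].
  unfold WF, within. exists d. intros t Ht [_ Htx].
  change (Rabs (t - x) < d) in Ht.
  assert (Hh : t - x <> 0) by lra.
  specialize (Hd (t - x) Hh Ht). rewrite Rplus_minus in Hd. exact Hd.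
Qed.

Lemma dw_cont (f : R -> R) x l : filterlim (fun t => (f t - f x) / (t - x)) (WF x) (locally l) ->
  filterlim f (WF x) (locally (f x)).
Proof.
  intros H.
  assert (H2 : filterlim (fun t => (f t - f x) / (t - x) * (t - x) + f x) (WF x) (locally (l * 0 + f x))).
  { apply lim_plus; [apply lim_mult; [exact H|]|apply lim_const].
    replace 0 with (x - x) by ring. apply lim_minus; [|apply lim_const].
    apply lim_to_WF. intros P HP. exact HP. }
  replace (l * 0 + f x) with (f x) in H2 by ring.
  eapply lim_ext; [|exact H2].
  apply WF_forall. intros t _ ht. field. lra.
Qed.

Lemma dw_mult (f g : R -> R) (x lf lg : R) :
  filterlim (fun t => (f t - f x) / (t - x)) (WF x) (locally lf) ->
  is_derive g x lg ->
  filterlim (fun t => (f t * g t - f x * g x) / (t - x)) (WF x) (locally (lf * g x + f x * lg)).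
Proof.
  intros Hf Hg.
  assert (Hg' := dpl_to_WF g x lg (proj1 (is_derive_Reals g x lg) Hg)).
  assert (Hgc := dw_cont g x lg Hg').
  assert (H := lim_plus _ _ _ _ (lim_mult _ _ _ _ Hf Hgc) (lim_mult _ _ _ _ (lim_const (f x)) Hg')).
  eapply lim_ext; [|exact H].
  apply WF_forall. intros t _ ht. cbv beta. field. lra.
Qed.

Section Main.
Variables (mu : R) (beta : R -> R) (M : R).
Hypothesis Hmu : 0 < mu < 1.
Hypothesis Hbpos : forall a, 0 <= a -> 0 < beta a.
Hypothesis HbM : forall a, 0 <= a -> beta a <= M.
Hypothesis Hbdec : forall a1 a2, 0 <= a1 -> a1 <= a2 -> beta a2 <= beta a1.

Let B := Bfun beta.
Definition ff x := exp (- Bfun beta x).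
Definition phi x := beta x * ff x.
Definition rr b := Rpower (1 - b) (mu - 1).
Definition pp b := Rpower (1 - b) mu.

Lemma beta_int a b : 0 <= a -> a <= b -> ex_RInt beta a b.
Proof. intros. apply ex_RInt_decr; auto. intros x y h1 h2 h3. apply Hbdec; lra. Qed.

Lemma B0 : Bfun beta 0 = 0.
Proof. unfold Bfun. exact (RInt_point (V := R_CompleteNormedModule) 0 beta). Qed.

Lemma B_diff x y : 0 <= x <= y -> Bfun beta y - Bfun beta x = RInt beta x y.
Proof.
  intros h. unfold Bfun.
  assert (HC := RInt_ChaslesR beta 0 x y (beta_int 0 x ltac:(lra) ltac:(lra)) (beta_int x y ltac:(lra) ltac:(lra))).
  lra.
Qed.

Lemma B_bounds x y : 0 <= x <= y ->
  (y - x) * beta y <= Bfun beta y - Bfun beta x <= (y - x) * beta x.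
Proof.
  intros h. rewrite B_diff by lra.
  apply RInt_le_const; [lra|apply beta_int; lra|].
  intros z hz. split; apply Hbdec; lra.
Qed.

Lemma ff_pos x : 0 < ff x.
Proof. apply exp_pos. Qed.

Lemma ff0 : ff 0 = 1.
Proof. unfold ff. rewrite B0, Ropp_0. apply exp_0. Qed.

Lemma ff_bounds x y : 0 <= x <= y -> (y - x) * phi y <= ff x - ff y <= (y - x) * phi x.
Proof.
  intros h. assert (Hb := B_bounds x y h). unfold phi, ff.
  set (d := Bfun beta y - Bfun beta x) in *.
  assert (Ey : exp (- Bfun beta y) = exp (- Bfun beta x) * exp (- d)).
  { rewrite <- exp_plus. f_equal. unfold d. ring. }
  assert (E1 := exp_ineq1_le (- d)). assert (E2 := exp_ineq1_le d).
  assert (E3 : exp d * exp (- d) = 1). { rewrite <- exp_plus. replace (d + - d) with 0 by ring. apply exp_0. }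
  assert (Px := exp_pos (- Bfun beta x)). assert (Pd := exp_pos (- d)).
  assert (Pbx : 0 < beta x) by (apply Hbpos; lra). assert (Pby : 0 < beta y) by (apply Hbpos; lra).
  rewrite Ey. split.
  -
    assert (H1 : d * exp (- d) <= 1 - exp (- d)) by nra.
    assert (H2 : (y - x) * beta y * exp (- d) <= d * exp (- d)) by nra.
    nra.
  - assert (H1 : 1 - exp (- d) <= d) by lra.
    nra.
Qed.

Lemma ff_dec x y : 0 <= x <= y -> ff y <= ff x.
Proof.
  intros h. assert (H := ff_bounds x y h). assert (0 <= (y - x) * phi y).
  { apply Rmult_le_pos; [lra|]. unfold phi. apply Rmult_le_pos; [left; apply Hbpos; lra|left; apply ff_pos]. }
  lra.
Qed.

Lemma ff_le1 x : 0 <= x -> ff x <= 1.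
Proof. intros h. rewrite <- ff0. apply ff_dec; lra. Qed.

Lemma phi_pos x : 0 <= x -> 0 < phi x.
Proof. intros h. unfold phi. apply Rmult_lt_0_compat; [apply Hbpos; auto|apply ff_pos]. Qed.

Lemma phi_le x : 0 <= x -> phi x <= M.
Proof.
  intros h. unfold phi. assert (H1 := HbM x h). assert (H2 := ff_le1 x h).
  assert (H3 := ff_pos x). assert (H4 := Hbpos x h). nra.
Qed.

Lemma phi_dec x y : 0 <= x <= y -> phi y <= phi x.
Proof.
  intros h. unfold phi. apply Rmult_le_compat.
  - left; apply Hbpos; lra. - left; apply ff_pos. - apply Hbdec; lra. - apply ff_dec; lra.
Qed.

Lemma rr_pos b : 0 < rr b. Proof. apply Rpower_pos. Qed.
Lemma pp_pos b : 0 < pp b. Proof. apply Rpower_pos. Qed.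

Lemma rr_incr x y : 0 <= x -> x <= y -> y < 1 -> rr x <= rr y.
Proof. intros. unfold rr. apply Rpower_mono_neg; lra. Qed.

Lemma pp_dec x y : 0 <= x -> x <= y -> y < 1 -> pp y <= pp x.
Proof. intros. unfold pp. apply Rpower_mono_pos; lra. Qed.

Lemma pp_rr b : b < 1 -> pp b = (1 - b) * rr b.
Proof. intros. unfold pp, rr. apply Rpower_split. lra. Qed.

Lemma rr_ge1 b : 0 <= b < 1 -> 1 <= rr b.
Proof.
  intros h. unfold rr. apply Rle_trans with (Rpower 1 (mu - 1)); [rewrite Rpower_1_l; lra|].
  apply Rpower_mono_neg; lra.
Qed.

Lemma pp0 : pp 0 = 1.
Proof. unfold pp. rewrite Rminus_0_r. apply Rpower_1_l. Qed.

Lemma rr_cont b : b < 1 -> continuous rr b.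
Proof.
  intros h. apply (ex_derive_continuous (K := R_AbsRing) (V := R_NormedModule)). exists (- ((mu - 1) * Rpower (1 - b) (mu - 1 - 1))).
  apply is_derive_pw; auto.
Qed.

Lemma is_RInt_val (f : R -> R) (a b l1 l2 : R) : is_RInt f a b l1 -> @eq R l1 l2 -> is_RInt f a b l2.
Proof. intros H ->; exact H. Qed.

Lemma rr_int y1 y2 : 0 <= y1 <= y2 -> y2 < 1 -> is_RInt rr y1 y2 ((pp y1 - pp y2) / mu).
Proof.
  intros h1 h2.
  assert (H := is_RInt_derive (V := R_CompleteNormedModule) (fun z => (- / mu) * pp z) rr y1 y2).
  eapply is_RInt_val; [apply H|].
  - intros x hx. rewrite Rmin_left in hx by lra. rewrite Rmax_right in hx by lra.
    assert (Hd := is_derive_pw mu x ltac:(lra)).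
    assert (Hc := is_derive_cstR (- / mu) x).
    assert (Hm := is_derive_multR _ _ x _ _ Hc Hd).
    eapply is_derive_val; [exact Hm|].
    cbv beta. unfold rr. field. lra.
  - intros x hx. rewrite Rmin_left in hx by lra. rewrite Rmax_right in hx by lra. apply rr_cont; lra.
  - change ((- / mu) * pp y2 - (- / mu) * pp y1 = (pp y1 - pp y2) / mu). field. lra.
Qed.

Definition gI t b := ff (exp t * b) * rr b.
Definition gP t b := phi (exp t * b) * (b * rr b).
Definition gK t b := phi (exp t * b) * pp b.

Lemma ex_gP t y : 0 <= y < 1 -> ex_RInt (gP t) 0 y.
Proof.
  intros hy. assert (He := exp_pos t). apply ex_RInt_prod_di; try lra.
  - intros x z h1 h2 h3. apply phi_dec. split; [nra|]. apply Rmult_le_compat_l; lra.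
  - intros x z h1 h2 h3. apply Rmult_le_compat; try lra. left; apply rr_pos. apply rr_incr; lra.
  - intros x hx. split; [left; apply phi_pos; nra|]. assert (H := rr_pos x). nra.
Qed.

Lemma ex_gK t y : 0 <= y < 1 -> ex_RInt (gK t) 0 y.
Proof.
  intros hy. assert (He := exp_pos t). apply ex_RInt_prod_dd; try lra.
  - intros x z h1 h2 h3. apply phi_dec. split; [nra|]. apply Rmult_le_compat_l; lra.
  - intros x z h1 h2 h3. apply pp_dec; lra.
  - intros x hx. split; [left; apply phi_pos; nra|left; apply pp_pos].
Qed.

Lemma ex_gI t y : 0 <= y < 1 -> ex_RInt (gI t) 0 y.
Proof.
  intros hy. assert (He := exp_pos t). apply ex_RInt_prod_di; try lra.
  - intros x z h1 h2 h3. apply ff_dec. split; [nra|]. apply Rmult_le_compat_l; lra.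
  - intros x z h1 h2 h3. apply rr_incr; lra.
  - intros x hx. split; [left; apply ff_pos|left; apply rr_pos].
Qed.

Lemma ex_rr y1 y2 : 0 <= y1 <= y2 -> y2 < 1 -> ex_RInt rr y1 y2.
Proof. intros. eexists. apply rr_int; auto. Qed.

Lemma M_pos : 0 < M.
Proof. apply Rlt_le_trans with (beta 0). apply Hbpos; lra. apply HbM; lra. Qed.

Lemma gP_bound t b : 0 <= b < 1 -> 0 <= gP t b <= M * rr b.
Proof.
  intros hb. unfold gP. assert (He := exp_pos t).
  assert (H1 := phi_pos (exp t * b) ltac:(nra)). assert (H2 := phi_le (exp t * b) ltac:(nra)).
  assert (H3 := rr_pos b). assert (HM := M_pos). split; [apply Rmult_le_pos; [lra|apply Rmult_le_pos; lra]|].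
  apply Rle_trans with (M * (b * rr b)); [apply Rmult_le_compat_r; [apply Rmult_le_pos; lra|lra]|]. apply Rmult_le_compat_l; [lra|]. nra.
Qed.

Lemma RInt_gP_seg t y1 y2 : 0 <= y1 <= y2 -> y2 < 1 ->
  0 <= RInt (gP t) y1 y2 <= M * ((pp y1 - pp y2) / mu).
Proof.
  intros h1 h2. assert (Hex : ex_RInt (gP t) y1 y2) by (apply ex_RInt_sub with 0 y2; try lra; apply ex_gP; lra).
  split.
  - apply RInt_ge_0; auto; try lra. intros x hx; apply gP_bound; lra.
  - rewrite <- (is_RInt_unique _ _ _ _ (rr_int y1 y2 h1 h2)).
    rewrite <- RInt_scalR by (apply ex_rr; auto).
    apply RInt_le; auto; try lra. apply ex_RInt_scalR, ex_rr; auto.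
    intros x hx; apply gP_bound; lra.
Qed.

Definition Pv t := impval (gP t).

Lemma Pv_imp t : imp (gP t) (Pv t).
Proof.
  unfold Pv. destruct (imp_exists (gP t) (M / mu)) as [L HL].
  - intros y hy. apply ex_gP; auto.
  - intros x hx. apply gP_bound; lra.
  - intros y hy. assert (H := RInt_gP_seg t 0 y ltac:(lra) ltac:(lra)).
    assert (H2 := pp_pos y). rewrite pp0 in H.
    apply Rle_trans with (M * ((1 - pp y) / mu)); [lra|].
    unfold Rdiv. assert (H3 := M_pos). assert (/ mu > 0) by (apply Rinv_0_lt_compat; lra).
    assert (0 <= M * pp y * / mu) by (repeat apply Rmult_le_pos; lra).
    replace (M * ((1 - pp y) * / mu)) with (M * / mu - M * pp y * / mu) by ring. lra.
  - rewrite (impval_eq _ _ HL). exact HL.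
Qed.

Lemma Pv_tail t y : 0 <= y < 1 -> 0 <= Pv t - RInt (gP t) 0 y <= M * pp y / mu.
Proof.
  intros hy. apply (imp_tail (gP t) (Pv t) y 0 (M * pp y / mu) (Pv_imp t) hy).
  intros y' hy'. assert (H := RInt_gP_seg t y y' ltac:(lra) ltac:(lra)).
  assert (H2 := pp_pos y'). assert (H3 := M_pos).
  split; [lra|]. apply Rle_trans with (M * ((pp y - pp y') / mu)); [lra|].
  unfold Rdiv. assert (/ mu > 0) by (apply Rinv_0_lt_compat; lra).
  assert (0 <= M * pp y' * / mu) by (repeat apply Rmult_le_pos; lra).
  replace (M * ((pp y - pp y') * / mu)) with (M * pp y * / mu - M * pp y' * / mu) by ring. lra.
Qed.

Lemma pp_lim : filterlim pp (at_left 1) (locally 0).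
Proof.
  apply lim_eps. intros eps he.
  set (d := Rmin (exp (ln eps / mu)) 1).
  assert (hd : 0 < d) by (apply Rmin_glb_lt; [apply exp_pos|lra]).
  apply filter_imp with (fun y => 1 - d < y /\ y < 1).
  - intros y [hy1 hy2]. rewrite Rminus_0_r. rewrite Rabs_pos_eq by (left; apply pp_pos).
    unfold pp, Rpower.
    assert (h1 : 1 - y < exp (ln eps / mu)).
    { assert (d <= exp (ln eps / mu)) by apply Rmin_l. lra. }
    assert (h2 : ln (1 - y) < ln eps / mu).
    { rewrite <- (ln_exp (ln eps / mu)). apply ln_increasing; lra. }
    rewrite <- (exp_ln eps he). apply exp_increasing.
    apply Rmult_lt_reg_r with (/ mu). apply Rinv_0_lt_compat; lra.
    replace (mu * ln (1 - y) * / mu) with (ln (1 - y)) by (field; lra). exact h2.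
  - apply filter_and; [apply at_left1_above; assert (d <= 1) by apply Rmin_r; lra|exact at_left1_lt].
Qed.

Section Ident.
Variable t : R.
Let e := exp t.
Definition hI b := exp t * gK t b + mu * gI t b.
Definition DI y := RInt hI 0 y + ff (exp t * y) * pp y.

Lemma ex_hI y1 y2 : 0 <= y1 <= y2 -> y2 < 1 -> ex_RInt hI y1 y2.
Proof.
  intros h1 h2. apply ex_RInt_sub with 0 y2; try lra.
  apply ex_RInt_plusR; apply ex_RInt_scalR; [apply ex_gK|apply ex_gI]; lra.
Qed.

Lemma DI_bound Y0 y1 y2 : 0 <= y1 -> y1 <= y2 -> y2 <= Y0 -> Y0 < 1 ->
  Rabs (DI y2 - DI y1) <= (y2 - y1) *
   ((- exp t * phi (exp t * y2) * pp y2 - mu * rr Y0 * ff (exp t * y2)) -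
    (- exp t * phi (exp t * y1) * pp y1 - mu * rr Y0 * ff (exp t * y1))).
Proof.
  intros h1 h2 h3 h4.
  assert (He : 0 < exp t) by apply exp_pos.
  set (E := exp t) in *.
  assert (HC : RInt hI 0 y1 + RInt hI y1 y2 = RInt hI 0 y2).
  { apply RInt_ChaslesR; apply ex_hI; lra. }
  assert (exK : ex_RInt (gK t) y1 y2) by (apply ex_RInt_sub with 0 y2; try lra; apply ex_gK; lra).
  assert (exI : ex_RInt (gI t) y1 y2) by (apply ex_RInt_sub with 0 y2; try lra; apply ex_gI; lra).
  assert (Hsplit : RInt hI y1 y2 = E * RInt (gK t) y1 y2 + mu * RInt (gI t) y1 y2).
  { unfold hI. fold E.
    rewrite (RInt_plusR (fun b => E * gK t b) (fun b => mu * gI t b) y1 y2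
       (ex_RInt_scalR _ _ _ _ exK) (ex_RInt_scalR _ _ _ _ exI)).
    rewrite (RInt_scalR (gK t) y1 y2 E exK), (RInt_scalR (gI t) y1 y2 mu exI). reflexivity. }
  set (A1 := RInt (gK t) y1 y2) in *. set (A2 := RInt (gI t) y1 y2) in *.
  set (a := phi (E * y1)). set (a' := phi (E * y2)).
  set (P1 := pp y1). set (P2 := pp y2). set (F1 := ff (E * y1)). set (F2 := ff (E * y2)).
  set (R0 := rr Y0). set (L := y2 - y1).
  assert (Ha' : 0 < a') by (apply phi_pos; nra).
  assert (Haa : a' <= a) by (apply phi_dec; split; nra).
  assert (HP2 : 0 < P2) by apply pp_pos.
  assert (HPP : P2 <= P1) by (apply pp_dec; lra).
  assert (HF2 : 0 < F2) by apply ff_pos.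
  assert (HFF : (E * y2 - E * y1) * a' <= F1 - F2 <= (E * y2 - E * y1) * a) by (apply ff_bounds; split; nra).
  replace (E * y2 - E * y1) with (E * L) in HFF by (unfold L; ring).
  assert (HL : 0 <= L) by (unfold L; lra).
  assert (HA1 : L * (a' * P2) <= A1 <= L * (a * P1)).
  { apply RInt_le_const; [lra| apply ex_RInt_sub with 0 y2; try lra; apply ex_gK; lra|].
    intros x hx. unfold gK. fold E. split.
    - apply Rmult_le_compat; try lra. apply phi_dec; split; nra. apply pp_dec; lra.
    - apply Rmult_le_compat; try (left; apply phi_pos; nra). left; apply pp_pos.
      apply phi_dec; split; nra. apply pp_dec; lra. }
  assert (Hrr := rr_int y1 y2 ltac:(lra) ltac:(lra)).
  set (Rr := RInt rr y1 y2).
  assert (HRr : Rr = (P1 - P2) / mu) by (apply is_RInt_unique; exact Hrr).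
  assert (Hexr : ex_RInt rr y1 y2) by (eexists; exact Hrr).
  assert (HA2 : F2 * Rr <= A2 <= F1 * Rr).
  { unfold Rr. rewrite <- !RInt_scalR by exact Hexr. split.
    - apply RInt_le; try lra. apply ex_RInt_scalR; auto. apply ex_RInt_sub with 0 y2; try lra; apply ex_gI; lra.
      intros x hx. unfold gI. fold E. apply Rmult_le_compat_r; [left; apply rr_pos|]. apply ff_dec; split; nra.
    - apply RInt_le; try lra. apply ex_RInt_sub with 0 y2; try lra; apply ex_gI; lra. apply ex_RInt_scalR; auto.
      intros x hx. unfold gI. fold E. apply Rmult_le_compat_r; [left; apply rr_pos|]. apply ff_dec; split; nra. }
  assert (HRr2 : Rr <= L * R0).
  { assert (H := RInt_le_const rr y1 y2 0 R0 ltac:(lra) Hexr).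
    apply H. intros x hx. split; [left; apply rr_pos|]. apply rr_incr; lra. }
  assert (HRr0 : 0 <= Rr) by (rewrite HRr; unfold Rdiv; apply Rmult_le_pos; [lra|left; apply Rinv_0_lt_compat; lra]).
  assert (HmuRr : mu * Rr = P1 - P2) by (rewrite HRr; field; lra).
  unfold DI. fold E. rewrite <- HC, Hsplit. fold F1 F2 P1 P2.
  assert (X1lo : - (E * L * (a * P1 - a' * P2)) <= E * A1 - (F1 - F2) * P1).
  { assert (E * (L * (a' * P2)) <= E * A1) by (apply Rmult_le_compat_l; lra).
    assert ((F1 - F2) * P1 <= (E * L * a) * P1) by (apply Rmult_le_compat_r; lra).
    lra. }
  assert (X1hi : E * A1 - (F1 - F2) * P1 <= E * L * (a * P1 - a' * P2)).
  { assert (E * A1 <= E * (L * (a * P1))) by (apply Rmult_le_compat_l; lra).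
    assert ((E * L * a') * P1 <= (F1 - F2) * P1) by (apply Rmult_le_compat_r; lra).
    assert ((E * L * a') * P2 <= (E * L * a') * P1).
    { apply Rmult_le_compat_l; [|lra]. apply Rmult_le_pos; [apply Rmult_le_pos|]; lra. }
    lra. }
  assert (X2lo : 0 <= mu * A2 - F2 * (P1 - P2)).
  { rewrite <- HmuRr. assert (mu * (F2 * Rr) <= mu * A2) by (apply Rmult_le_compat_l; lra). lra. }
  assert (X2hi : mu * A2 - F2 * (P1 - P2) <= L * (mu * R0 * (F1 - F2))).
  { rewrite <- HmuRr. assert (mu * A2 <= mu * (F1 * Rr)) by (apply Rmult_le_compat_l; lra).
    assert (HF12 : 0 <= F1 - F2).
    { assert (0 <= E * L * a') by (apply Rmult_le_pos; [apply Rmult_le_pos|]; lra). lra. }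
    assert (mu * ((F1 - F2) * Rr) <= mu * ((F1 - F2) * (L * R0))).
    { apply Rmult_le_compat_l; [lra|]. apply Rmult_le_compat_l; lra. }
    lra. }
  apply Rabs_le. split; lra.
Qed.

Lemma DI_const y : 0 <= y < 1 -> DI y = 1.
Proof.
  intros hy.
  rewrite (const_lemma DI (fun z => - exp t * phi (exp t * z) * pp z - mu * rr y * ff (exp t * z)) 0 y).
  - unfold DI. rewrite (RInt_point (V := R_CompleteNormedModule)). rewrite Rmult_0_r, ff0, pp0.
    change (0 + 1 * 1 = 1). ring.
  - lra.
  - intros x z h1 h2 h3. apply (DI_bound y); lra.
Qed.

Lemma K_imp I : imp (gI t) I -> imp (fun b => exp t * gK t b) (1 - mu * I).
Proof.
  intros [Hex Hl]. split.
  - intros y hy. apply ex_RInt_scalR, ex_gK; auto.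
  - apply lim_ext with (fun y => 1 - ff (exp t * y) * pp y - mu * RInt (gI t) 0 y).
    + apply filter_imp with (fun y => 0 < y < 1).
      * intros y hy. assert (H := DI_const y ltac:(lra)). unfold DI, hI in H.
        assert (eK : ex_RInt (gK t) 0 y) by (apply ex_gK; lra).
        assert (eI : ex_RInt (gI t) 0 y) by (apply ex_gI; lra).
        rewrite (RInt_plusR (fun b => exp t * gK t b) (fun b => mu * gI t b) 0 y
          (ex_RInt_scalR _ _ _ _ eK) (ex_RInt_scalR _ _ _ _ eI)) in H.
        rewrite (RInt_scalR (gK t) 0 y (exp t) eK), (RInt_scalR (gI t) 0 y mu eI) in H.
        rewrite (RInt_scalR (gK t) 0 y (exp t) eK). lra.
      * apply filter_and; [apply at_left1_above; lra|exact at_left1_lt].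
    + replace (1 - mu * I) with ((1 - 0) - mu * I) by ring. apply lim_minus; [apply lim_minus|].
      * apply lim_const.
      * apply (filterlim_le_le (F := at_left 1) (fun _ => 0) _ pp 0).
        -- apply filter_imp with (fun y => 0 < y < 1).
           ++ intros y hy. assert (H1 := ff_pos (exp t * y)). assert (H2 := pp_pos y).
              assert (H4 := exp_pos t).
              assert (H3 := ff_le1 (exp t * y) ltac:(apply Rmult_le_pos; lra)). split.
              ** apply Rmult_le_pos; lra.
              ** rewrite <- (Rmult_1_l (pp y)) at 2. apply Rmult_le_compat_r; lra.
           ++ apply filter_and; [apply at_left1_above; lra|exact at_left1_lt].
        -- apply lim_const.
        -- apply pp_lim.
      * apply lim_mult; [apply lim_const|exact Hl].
Qed.

End Ident.


Definition Uf s y := RInt (fun b => phi (exp s * b)) 0 y.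
Definition Phi x := RInt phi 0 x.

Lemma ex_phi a b : 0 <= a -> a <= b -> ex_RInt phi a b.
Proof. intros. apply ex_RInt_decr; auto. intros x z h1 h2 h3. apply phi_dec; lra. Qed.

Lemma ex_phis s a b : 0 <= a -> a <= b -> ex_RInt (fun z => phi (exp s * z)) a b.
Proof.
  intros. assert (He := exp_pos s). apply ex_RInt_decr; auto. intros x z h1 h2 h3.
  apply phi_dec. split; [nra|]. apply Rmult_le_compat_l; lra.
Qed.

Lemma Uf_eq s y : 0 <= y -> Uf s y = / exp s * Phi (exp s * y).
Proof.
  intros hy. assert (He := exp_pos s).
  assert (H : is_RInt phi (exp s * 0 + 0) (exp s * y + 0) (Phi (exp s * y))).
  { replace (exp s * 0 + 0) with 0 by ring. replace (exp s * y + 0) with (exp s * y) by ring.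
    apply (RInt_correct (V := R_CompleteNormedModule)). apply ex_phi; nra. }
  assert (H2 := is_RInt_comp_lin phi (exp s) 0 0 y _ H).
  assert (H3 : RInt (fun z => exp s * phi (exp s * z)) 0 y = Phi (exp s * y)).
  { apply is_RInt_unique. eapply is_RInt_ext; [|exact H2]. intros x _.
    change (exp s * phi (exp s * x + 0) = exp s * phi (exp s * x)). rewrite Rplus_0_r. reflexivity. }
  rewrite RInt_scalR in H3 by (apply ex_phis; lra).
  unfold Uf. rewrite <- H3. rewrite <- Rmult_assoc, Rinv_l, Rmult_1_l; [reflexivity|lra].
Qed.

Lemma Phi_lip x0 x : 0 <= x0 -> 0 <= x -> Rabs (Phi x - Phi x0) <= M * Rabs (x - x0).
Proof.
  intros h0 h. assert (HM := M_pos).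
  assert (G : forall u v, 0 <= u <= v -> 0 <= Phi v - Phi u <= M * (v - u)).
  { intros u v huv. unfold Phi.
    assert (HC := RInt_ChaslesR phi 0 u v (ex_phi 0 u ltac:(lra) ltac:(lra)) (ex_phi u v ltac:(lra) ltac:(lra))).
    assert (Hb := RInt_le_const phi u v 0 M ltac:(lra) (ex_phi u v ltac:(lra) ltac:(lra))).
    assert (Hb' : (v - u) * 0 <= RInt phi u v <= (v - u) * M).
    { apply Hb. intros z hz. split; [left; apply phi_pos; lra|apply phi_le; lra]. }
    split; nra. }
  destruct (Rle_dec x0 x).
  - assert (H := G x0 x ltac:(lra)). rewrite !Rabs_pos_eq by lra. lra.
  - assert (H := G x x0 ltac:(lra)). rewrite (Rabs_left1 (x - x0)) by lra.
    rewrite Rabs_left1 by lra. lra.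
Qed.

Lemma lim_exp x : filterlim exp (locally x) (locally (exp x)).
Proof.
  apply (ex_derive_continuous (K := R_AbsRing) (V := R_NormedModule)). exists (exp x). apply is_derive_exp.
Qed.

Lemma Uf_cont s y : 0 <= y -> filterlim (fun t => Uf t y) (locally s) (locally (Uf s y)).
Proof.
  intros hy. rewrite Uf_eq by auto.
  apply lim_ext with (fun t => / exp t * Phi (exp t * y)).
  { apply filter_forall. intros t. rewrite Uf_eq; auto. }
  apply lim_mult.
  - apply lim_inv. apply Rgt_not_eq, exp_pos. apply lim_exp.
  - apply lim_eps. intros eps he. assert (HM := M_pos).
    assert (Hl := eps_lim (fun t => exp t * y) (exp s * y)
      (lim_mult exp (fun _ => y) (exp s) y (lim_exp s) (lim_const y)) (eps / M) ltac:(apply Rdiv_lt_0_compat; lra)).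
    apply filter_imp with (2 := Hl). intros t Ht.
    assert (H1 := Phi_lip (exp s * y) (exp t * y) ltac:(assert (H0 := exp_pos s); nra) ltac:(assert (H0 := exp_pos t); nra)).
    apply Rle_lt_trans with (1 := H1).
    apply Rmult_lt_reg_l with (/ M). apply Rinv_0_lt_compat; lra.
    replace (/ M * (M * Rabs (exp t * y - exp s * y))) with (Rabs (exp t * y - exp s * y)) by (field; lra).
    replace (/ M * eps) with (eps / M) by (unfold Rdiv; ring). exact Ht.
Qed.

Lemma gP_diff s1 s2 y : s1 <= s2 -> 0 <= y < 1 ->
  0 <= RInt (gP s1) 0 y - RInt (gP s2) 0 y <= rr y * (Uf s1 y - Uf s2 y).
Proof.
  intros hs hy.
  assert (He : exp s1 <= exp s2) by (destruct (Req_dec s1 s2) as [->|n]; [lra|left; apply exp_increasing; lra]).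
  assert (He1 := exp_pos s1).
  set (dfn := fun b => (phi (exp s1 * b) - phi (exp s2 * b)) * (b * rr b)).
  assert (e1 := ex_gP s1 y hy). assert (e2 := ex_gP s2 y hy).
  assert (Hd : RInt (gP s1) 0 y - RInt (gP s2) 0 y = RInt dfn 0 y).
  { assert (H := RInt_plusR (gP s1) (fun b => -1 * gP s2 b) 0 y e1 (ex_RInt_scalR _ _ _ _ e2)).
    rewrite RInt_scalR in H by exact e2.
    assert (H2 : RInt (fun x => gP s1 x + -1 * gP s2 x) 0 y = RInt dfn 0 y).
    { apply RInt_extR. intros x _. unfold dfn, gP. ring. }
    lra. }
  assert (edfn : ex_RInt dfn 0 y).
  { eapply ex_RInt_extR; [|exact (ex_RInt_plusR _ _ 0 y e1 (ex_RInt_scalR _ _ _ (-1) e2))].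
    intros x _. unfold dfn, gP. ring. }
  assert (pt : forall b, 0 <= b <= y -> 0 <= phi (exp s1 * b) - phi (exp s2 * b)).
  { intros b hb. assert (phi (exp s2 * b) <= phi (exp s1 * b)).
    { apply phi_dec. split; [nra|]. apply Rmult_le_compat_r; lra. } lra. }
  rewrite Hd. split.
  - apply RInt_ge_0; try lra; auto. intros x hx. unfold dfn. apply Rmult_le_pos; [apply pt; lra|].
    assert (H := rr_pos x). apply Rmult_le_pos; lra.
  - assert (eU : ex_RInt (fun b => rr y * (phi (exp s1 * b) - phi (exp s2 * b))) 0 y).
    { apply ex_RInt_scalR.
      eapply ex_RInt_extR; [|exact (ex_RInt_plusR _ _ 0 y (ex_phis s1 0 y ltac:(lra) ltac:(lra))
         (ex_RInt_scalR _ _ _ (-1) (ex_phis s2 0 y ltac:(lra) ltac:(lra))))].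
      intros x _. cbv beta. ring. }
    assert (HU : RInt (fun b => rr y * (phi (exp s1 * b) - phi (exp s2 * b))) 0 y = rr y * (Uf s1 y - Uf s2 y)).
    { rewrite RInt_scalR.
      - f_equal. unfold Uf.
        assert (H := RInt_plusR (fun b => phi (exp s1 * b)) (fun b => -1 * phi (exp s2 * b)) 0 y
           (ex_phis s1 0 y ltac:(lra) ltac:(lra)) (ex_RInt_scalR _ _ _ (-1) (ex_phis s2 0 y ltac:(lra) ltac:(lra)))).
        rewrite RInt_scalR in H by (apply ex_phis; lra).
        rewrite <- (RInt_extR (fun x => phi (exp s1 * x) + -1 * phi (exp s2 * x))). lra.
        intros x _. cbv beta. ring.
      - eapply ex_RInt_extR; [|exact (ex_RInt_plusR _ _ 0 y (ex_phis s1 0 y ltac:(lra) ltac:(lra))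
         (ex_RInt_scalR _ _ _ (-1) (ex_phis s2 0 y ltac:(lra) ltac:(lra))))].
        intros x _. cbv beta. ring. }
    rewrite <- HU. apply RInt_le; try lra; auto.
    intros x hx. unfold dfn. rewrite Rmult_comm. apply Rmult_le_compat_r; [apply pt; lra|].
    assert (H1 := rr_incr x y ltac:(lra) ltac:(lra) ltac:(lra)). assert (H2 := rr_pos x). nra.
Qed.

Lemma Pv_cont s : filterlim Pv (locally s) (locally (Pv s)).
Proof.
  apply lim_eps. intros eps he.
  assert (Hev := eps_lim pp 0 pp_lim (eps / 3 * mu / M) ltac:(assert (HM := M_pos); apply Rdiv_lt_0_compat; [apply Rmult_lt_0_compat|]; lra)).
  assert (Hall : at_left 1 (fun x => Rabs (pp x - 0) < eps / 3 * mu / M /\ (0 < x /\ x < 1))).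
  { apply filter_and; [exact Hev|]. apply filter_and; [apply at_left1_above; lra|exact at_left1_lt]. }
  destruct (filter_ex (F := at_left 1) _ Hall) as [y [Hy1 [Hy2 Hy3]]].
  rewrite Rminus_0_r, Rabs_pos_eq in Hy1 by (left; apply pp_pos).
  assert (Htail : M * pp y / mu < eps / 3).
  { assert (HM := M_pos). apply Rmult_lt_reg_r with (mu / M). apply Rdiv_lt_0_compat; lra.
    replace (M * pp y / mu * (mu / M)) with (pp y) by (field; lra).
    replace (eps / 3 * (mu / M)) with (eps / 3 * mu / M) by (field; lra). exact Hy1. }
  assert (Hr := rr_pos y).
  assert (HU := eps_lim (F := locally s) _ _ (Uf_cont s y ltac:(lra)) (eps / 3 / rr y) ltac:(apply Rdiv_lt_0_compat; lra)).
  apply filter_imp with (2 := HU). intros t Ht.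
  assert (T1 := Pv_tail t y ltac:(lra)). assert (T2 := Pv_tail s y ltac:(lra)).
  assert (Hmid : Rabs (RInt (gP t) 0 y - RInt (gP s) 0 y) < eps / 3).
  { assert (Hm : Rabs (RInt (gP t) 0 y - RInt (gP s) 0 y) <= rr y * Rabs (Uf t y - Uf s y)).
    { destruct (Rle_dec t s) as [hts|hts].
      - assert (H := gP_diff t s y hts ltac:(lra)).
        rewrite Rabs_pos_eq by lra. rewrite (Rabs_pos_eq (Uf t y - Uf s y)). lra.
        assert (0 <= rr y * (Uf t y - Uf s y)) by lra.
        apply Rmult_le_reg_l with (rr y); lra.
      - assert (H := gP_diff s t y ltac:(lra) ltac:(lra)).
        rewrite Rabs_minus_sym. rewrite Rabs_pos_eq by lra.
        rewrite Rabs_minus_sym. rewrite (Rabs_pos_eq (Uf s y - Uf t y)). lra.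
        assert (0 <= rr y * (Uf s y - Uf t y)) by lra.
        apply Rmult_le_reg_l with (rr y); lra. }
    apply Rle_lt_trans with (1 := Hm).
    apply Rmult_lt_reg_l with (/ rr y). apply Rinv_0_lt_compat; lra.
    replace (/ rr y * (rr y * Rabs (Uf t y - Uf s y))) with (Rabs (Uf t y - Uf s y)) by (field; lra).
    replace (/ rr y * (eps / 3)) with (eps / 3 / rr y) by (field; lra). exact Ht. }
  apply Rabs_lt_between in Hmid. apply Rabs_lt_between. lra.
Qed.

Lemma pw_bound tau t b : t <> tau -> 0 < b < 1 ->
  let u := t - tau in let c := (exp t - exp tau) / u in
  let Q := (ff (exp t * b) - ff (exp tau * b)) * rr b / u in
  (tau < t -> - c * gP tau b <= Q <= - c * gP t b) /\
  (t < tau -> - c * gP t b <= Q <= - c * gP tau b).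
Proof.
  intros htt hb u c Q.
  assert (hu : u <> 0) by (unfold u; lra).
  assert (Hcu : c * u = exp t - exp tau) by (unfold c; field; exact hu).
  assert (Hr := rr_pos b).
  assert (Et := exp_pos t). assert (Eu := exp_pos tau).
  split; intros hlt.
  - assert (Hx : exp tau < exp t) by (apply exp_increasing; lra).
    assert (Hf := ff_bounds (exp tau * b) (exp t * b) ltac:(split; nra)).
    assert (h1 : (exp t * b - exp tau * b) * phi (exp t * b) * rr b <= (ff (exp tau * b) - ff (exp t * b)) * rr b)
      by (apply Rmult_le_compat_r; lra).
    assert (h2 : (ff (exp tau * b) - ff (exp t * b)) * rr b <= (exp t * b - exp tau * b) * phi (exp tau * b) * rr b)
      by (apply Rmult_le_compat_r; lra).
    apply div_pos_bounds; [unfold u; lra|].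
    replace (- c * gP tau b * u) with (- (c * u) * b * phi (exp tau * b) * rr b) by (unfold gP; ring).
    replace (- c * gP t b * u) with (- (c * u) * b * phi (exp t * b) * rr b) by (unfold gP; ring).
    rewrite Hcu. split; lra.
  - assert (Hx : exp t < exp tau) by (apply exp_increasing; lra).
    assert (Hf := ff_bounds (exp t * b) (exp tau * b) ltac:(split; nra)).
    assert (h1 : (exp tau * b - exp t * b) * phi (exp tau * b) * rr b <= (ff (exp t * b) - ff (exp tau * b)) * rr b)
      by (apply Rmult_le_compat_r; lra).
    assert (h2 : (ff (exp t * b) - ff (exp tau * b)) * rr b <= (exp tau * b - exp t * b) * phi (exp t * b) * rr b)
      by (apply Rmult_le_compat_r; lra).
    apply div_neg_bounds; [unfold u; lra|].
    replace (- c * gP tau b * u) with (- (c * u) * b * phi (exp tau * b) * rr b) by (unfold gP; ring).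
    replace (- c * gP t b * u) with (- (c * u) * b * phi (exp t * b) * rr b) by (unfold gP; ring).
    rewrite Hcu. split; lra.
Qed.

Section Deriv.
Variable C : R -> R.
Hypothesis HCpos : forall t, 0 <= t -> 0 < C t.
Hypothesis HW : forall t, 0 <= t -> is_RInt_gen (Wfun beta mu C t) (at_point 0) (at_left 1) 1.

Lemma W_eq t b : Wfun beta mu C t b = C t * gI t b.
Proof. unfold Wfun, gI, ff, rr. ring. Qed.

Lemma I_imp t : 0 <= t -> imp (gI t) (/ C t).
Proof.
  intros ht. assert (H := imp_scal _ _ (/ C t) (gen_imp _ _ (HW t ht))).
  rewrite Rmult_1_r in H. eapply imp_ext; [|exact H]. intros x _. cbv beta.
  rewrite W_eq. field. apply Rgt_not_eq, HCpos; auto.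
Qed.

Variable tau : R.
Hypothesis Htau : 0 <= tau.

Lemma quot_bounds t : 0 <= t -> t <> tau ->
  let q := (/ C t - / C tau) / (t - tau) in let c := (exp t - exp tau) / (t - tau) in
  (- c * Pv tau <= q <= - c * Pv t) \/ (- c * Pv t <= q <= - c * Pv tau).
Proof.
  intros ht htt q c.
  assert (hu : t - tau <> 0) by lra.
  assert (HQ := imp_lin _ _ _ _ (/ (t - tau)) (- / (t - tau)) (I_imp t ht) (I_imp tau Htau)).
  assert (n1 : C t <> 0) by (apply Rgt_not_eq, HCpos; auto).
  assert (n2 : C tau <> 0) by (apply Rgt_not_eq, HCpos; auto).
  replace (/ (t - tau) * / C t + - / (t - tau) * / C tau) with q in HQ by (unfold q; field; repeat split; assumption).
  assert (Hlo := imp_scal _ _ (- c) (Pv_imp tau)).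
  assert (Hhi := imp_scal _ _ (- c) (Pv_imp t)).
  destruct (Rlt_dec tau t) as [hlt|hlt].
  - left. split.
    + eapply imp_le; [exact Hlo|exact HQ|]. intros b hb. cbv beta.
      destruct (pw_bound tau t b htt hb) as [H _]. specialize (H hlt).
      replace (/ (t - tau) * gI t b + - / (t - tau) * gI tau b) with
        ((ff (exp t * b) - ff (exp tau * b)) * rr b / (t - tau)) by (unfold gI; field; exact hu).
      apply H.
    + eapply imp_le; [exact HQ|exact Hhi|]. intros b hb. cbv beta.
      destruct (pw_bound tau t b htt hb) as [H _]. specialize (H hlt).
      replace (/ (t - tau) * gI t b + - / (t - tau) * gI tau b) with
        ((ff (exp t * b) - ff (exp tau * b)) * rr b / (t - tau)) by (unfold gI; field; exact hu).
      apply H.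
  - right. assert (hlt' : t < tau) by lra. split.
    + eapply imp_le; [exact Hhi|exact HQ|]. intros b hb. cbv beta.
      destruct (pw_bound tau t b htt hb) as [_ H]. specialize (H hlt').
      replace (/ (t - tau) * gI t b + - / (t - tau) * gI tau b) with
        ((ff (exp t * b) - ff (exp tau * b)) * rr b / (t - tau)) by (unfold gI; field; exact hu).
      apply H.
    + eapply imp_le; [exact HQ|exact Hlo|]. intros b hb. cbv beta.
      destruct (pw_bound tau t b htt hb) as [_ H]. specialize (H hlt').
      replace (/ (t - tau) * gI t b + - / (t - tau) * gI tau b) with
        ((ff (exp t * b) - ff (exp tau * b)) * rr b / (t - tau)) by (unfold gI; field; exact hu).
      apply H.
Qed.

Lemma I_deriv : filterlim (fun t => (/ C t - / C tau) / (t - tau)) (WF tau) (locally (- exp tau * Pv tau)).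
Proof.
  assert (Hc := dpl_to_WF exp tau (exp tau) (derivable_pt_lim_exp tau)).
  assert (HA := lim_mult _ _ _ _ (lim_opp _ _ Hc) (lim_const (Pv tau))).
  assert (HB := lim_mult _ _ _ _ (lim_opp _ _ Hc) (lim_to_WF _ _ _ (Pv_cont tau))).
  apply lim_eps. intros eps he.
  assert (H1 := eps_lim _ _ HA (eps / 2) ltac:(lra)).
  assert (H2 := eps_lim _ _ HB (eps / 2) ltac:(lra)).
  assert (H3 : WF tau (fun t => 0 <= t /\ t <> tau)) by (apply WF_forall; auto).
  apply filter_imp with (2 := filter_and _ _ H1 (filter_and _ _ H2 H3)).
  intros t [h1 [h2 [h3 h4]]]. cbv beta in *.
  destruct (quot_bounds t h3 h4) as [[g1 g2]|[g1 g2]];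
  apply Rabs_lt_between in h1; apply Rabs_lt_between in h2; apply Rabs_lt_between; lra.
Qed.

Definition dC := C tau * C tau * (exp tau * Pv tau).

Lemma C_deriv : deriv_within (fun t => 0 <= t) C tau dC.
Proof.
  apply dw_WF.
  assert (HI := I_deriv).
  assert (HIc := dw_cont (fun t => / C t) tau _ HI).
  assert (HCc : filterlim C (WF tau) (locally (C tau))).
  { assert (n0 : / C tau <> 0) by (apply Rgt_not_eq, Rinv_0_lt_compat, HCpos; auto).
    assert (H := lim_inv (fun t => / C t) (/ C tau) n0 HIc).
    rewrite Rinv_inv in H. eapply lim_ext; [|exact H].
    apply WF_forall. intros t ht _. rewrite Rinv_inv. reflexivity. }
  assert (H := lim_mult _ _ _ _ (lim_mult _ _ _ _ (lim_opp _ _ HCc) (lim_const (C tau))) HI).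
  replace dC with (- C tau * C tau * (- exp tau * Pv tau)) by (unfold dC; ring).
  eapply lim_ext; [|exact H].
  apply WF_forall. intros t ht htt. cbv beta.
  assert (0 < C t) by auto. assert (0 < C tau) by auto.
  field. repeat split; lra.
Qed.

Lemma W0 : Wfun beta mu C tau 0 = C tau.
Proof. unfold Wfun. rewrite Rmult_0_r, B0, Ropp_0, exp_0, Rminus_0_r, Rpower_1_l. ring. Qed.

Lemma boundary : is_RInt_gen (fun b => exp tau * beta (exp tau * b) * Wfun beta mu C tau b)
  (at_point 0) (at_left 1) (Wfun beta mu C tau 0 * (1 + (dC / (C tau ^ 2) - mu / C tau))).
Proof.
  apply imp_gen.
  assert (HK := K_imp tau (/ C tau) (I_imp tau Htau)).
  assert (H := imp_lin _ _ _ _ (C tau) (C tau * exp tau) HK (Pv_imp tau)).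
  assert (hC : 0 < C tau) by auto.
  replace (Wfun beta mu C tau 0 * (1 + (dC / (C tau ^ 2) - mu / C tau))) with
    (C tau * (1 - mu * / C tau) + C tau * exp tau * Pv tau).
  - eapply imp_ext; [|exact H]. intros b hb. cbv beta.
    rewrite W_eq. unfold gK, gP, gI, phi. rewrite pp_rr by lra. ring.
  - rewrite W0. unfold dC. field. lra.
Qed.

Lemma B_deriv Y : 0 < Y -> continuity_pt beta Y -> is_derive (Bfun beta) Y (beta Y).
Proof.
  intros hY hc. unfold Bfun.
  apply (is_derive_RInt beta (fun z => RInt beta 0 z) 0 Y).
  - exists (mkposreal Y hY). intros z hz. change (Rabs (z - Y) < Y) in hz.
    apply Rabs_lt_between' in hz.
    apply (RInt_correct (V := R_CompleteNormedModule)). apply beta_int; lra.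
  - apply continuity_pt_filterlim. exact hc.
Qed.

Lemma comp_deriv (s b : R) (dB : R) : is_derive (Bfun beta) (exp s * b) dB ->
  is_derive (fun t => exp (- Bfun beta (exp t * b))) s
    (exp (- Bfun beta (exp s * b)) * (- (dB * (exp s * b)))).
Proof.
  intros HB.
  assert (H1 : is_derive (fun t => exp t * b) s (exp s * b)).
  { eapply is_derive_val; [apply is_derive_multR; [apply is_derive_exp|apply is_derive_cstR]|]. cbv beta. ring. }
  assert (H2 := is_derive_comp _ _ s _ _ HB H1).
  assert (H3 := is_derive_opp _ _ _ H2).
  assert (H4 := is_derive_comp _ _ s _ _ (is_derive_exp (- Bfun beta (exp s * b))) H3).
  eapply is_derive_val; [exact H4|]. cbv beta. rewrite !scalR.
  change (opp (scal (exp s * b) dB)) with (- ((exp s * b) * dB)). ring.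
Qed.

Lemma comp_deriv_x (x : R) (dB : R) : is_derive (Bfun beta) (exp tau * x) dB ->
  is_derive (fun z => exp (- Bfun beta (exp tau * z))) x
    (exp (- Bfun beta (exp tau * x)) * (- (dB * exp tau))).
Proof.
  intros HB.
  assert (H1 : is_derive (fun z => exp tau * z) x (exp tau)).
  { eapply is_derive_val; [apply is_derive_multR; [apply is_derive_cstR|apply is_derive_id]|]. cbv beta. change (0 * x + exp tau * 1 = exp tau). ring. }
  assert (H2 := is_derive_comp _ _ x _ _ HB H1).
  assert (H3 := is_derive_opp _ _ _ H2).
  assert (H4 := is_derive_comp _ _ x _ _ (is_derive_exp (- Bfun beta (exp tau * x))) H3).
  eapply is_derive_val; [exact H4|]. cbv beta. rewrite !scalR.
  change (opp (scal (exp tau) dB)) with (- (exp tau * dB)). ring.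
Qed.

Lemma transport b : 0 < b < 1 -> continuity_pt beta (exp tau * b) ->
  exists dWt dWb : R,
    deriv_within (fun t => 0 <= t) (fun t => Wfun beta mu C t b) tau dWt /\
    is_derive (fun x => (1 - x) * Wfun beta mu C tau x) b dWb /\
    dWt + dWb + exp tau * beta (exp tau * b) * Wfun beta mu C tau b
      = Wfun beta mu C tau b * C tau * (dC / (C tau ^ 2) - mu / C tau).
Proof.
  intros hb hc.
  assert (hY : 0 < exp tau * b) by (assert (H := exp_pos tau); nra).
  assert (HB := B_deriv _ hY hc).
  assert (H1 := dw_mult C (fun t => exp (- Bfun beta (exp t * b))) tau dC _
      (proj1 (dw_WF _ _ _) C_deriv) (comp_deriv tau b _ HB)).
  assert (H2 := dw_mult _ (fun _ => rr b) tau _ 0 H1 (is_derive_cstR (rr b) tau)).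
  assert (Hk := comp_deriv_x b _ HB).
  assert (H3 := is_derive_multR _ _ b _ _ (is_derive_cstR (C tau) b)
                   (is_derive_multR _ _ b _ _ Hk (is_derive_pw mu b ltac:(lra)))).
  eexists. eexists. split; [|split].
  - apply dw_WF. exact H2.
  - eapply is_derive_ext_locR; [|exact H3].
    assert (hp : 0 < 1 - b) by lra.
    exists (mkposreal _ hp). intros x hx. simpl in hx.
    apply Rabs_lt_between' in hx. cbv beta.
    change (Rpower (1 - x) mu) with (pp x). rewrite pp_rr by lra. unfold Wfun, rr. ring.
  - cbv beta. change (Rpower (1 - b) mu) with (pp b). rewrite pp_rr by lra.
    assert (hC : 0 < C tau) by auto. unfold Wfun, rr. field. lra.
Qed.

Lemma final_res : exists dC0 : R,
      deriv_within (fun t => 0 <= t) C tau dC0 /\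
      let delta := dC0 / (C tau ^ 2) - mu / C tau in
      is_RInt_gen (fun b => exp tau * beta (exp tau * b) * Wfun beta mu C tau b)
        (at_point 0) (at_left 1) (Wfun beta mu C tau 0 * (1 + delta)) /\
      (forall b, 0 < b < 1 -> continuity_pt beta (exp tau * b) ->
         exists dWt dWb : R,
           deriv_within (fun t => 0 <= t) (fun t => Wfun beta mu C t b) tau dWt /\
           is_derive (fun x => (1 - x) * Wfun beta mu C tau x) b dWb /\
           dWt + dWb + exp tau * beta (exp tau * b) * Wfun beta mu C tau b
             = Wfun beta mu C tau b * C tau * delta).
Proof.
  exists dC. split; [exact C_deriv|]. cbv zeta. split.
  - exact boundary.
  - exact transport.
Qed.

End Deriv.

End Main.


Theorem proposition2 (mu : R) (beta : R -> R) (C : R -> R) :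
  0 < mu < 1 ->
  (forall a, 0 <= a -> 0 < beta a) ->
  (exists M, forall a, 0 <= a -> beta a <= M) ->
  (forall a1 a2, 0 <= a1 -> a1 <= a2 -> beta a2 <= beta a1) ->
  is_lim (fun a => a * beta a) p_infty mu ->
  (forall tau, 0 <= tau -> 0 < C tau) ->
  (forall tau, 0 <= tau ->
     is_RInt_gen (Wfun beta mu C tau) (at_point 0) (at_left 1) 1) ->
  forall tau, 0 <= tau ->
    exists dC : R,
      deriv_within (fun t => 0 <= t) C tau dC /\
      let delta := dC / (C tau ^ 2) - mu / C tau in
      is_RInt_gen (fun b => exp tau * beta (exp tau * b) * Wfun beta mu C tau b)
        (at_point 0) (at_left 1) (Wfun beta mu C tau 0 * (1 + delta)) /\
      (forall b, 0 < b < 1 -> continuity_pt beta (exp tau * b) ->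
         exists dWt dWb : R,
           deriv_within (fun t => 0 <= t) (fun t => Wfun beta mu C t b) tau dWt /\
           is_derive (fun x => (1 - x) * Wfun beta mu C tau x) b dWb /\
           dWt + dWb + exp tau * beta (exp tau * b) * Wfun beta mu C tau b
             = Wfun beta mu C tau b * C tau * delta).
Proof.
  intros Hmu Hbpos [M HbM] Hbdec _ HCpos HW tau Htau.
  exact (final_res mu beta M Hmu Hbpos HbM Hbdec C HCpos HW tau Htau).
Qed.
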